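(* Let $(x(n))_{n\geq0}$ and $(y(n))_{n\geq0}$ be strictly increasing sequences of nonnegative integers such that $\{x(n): n\geq 0\} \cup \{y(n): n \geq 0\} = \mathbb{N}$, $x(0)=1$, $y(0)=0$, and for all $n \geq 0$, $$x(x(n)) = y(x(n)) - 1 \quad\text{and}\quad y(y(n)) = x(y(n)) - 1.$$ Then $x(n) = a(n)$ and $y(n) = b(n)$ for all $n \geq 0$.
   Context: $\mathbb{N} = \{0,1,2,\ldots\}$. A nonnegative integer is odious if the sum of its binary digits is odd and evil if it is even. $(a(n))_{n\geq0}$ is the increasing sequence of odious numbers and $(b(n))_{n\geq 0}$ the increasing sequence of evil numbers, both indexed from $0$. *)

(* Defs.v *)
From mathcomp Require Import all_boot.
Set Implicit Arguments. Unset Strict Implicit. Unset Printing Implicit Defensive.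

Fixpoint binsum_aux (fuel n : nat) : nat :=
  match fuel with
  | 0 => 0
  | f.+1 => if n is 0 then 0 else odd n + binsum_aux f n./2
  end.
Definition binsum (n : nat) : nat := binsum_aux n n.

Definition odious (n : nat) : bool := odd (binsum n).
Definition evil (n : nat) : bool := ~~ odd (binsum n).

(* The increasing enumerations, indexed from 0.  Among {2k, 2k+1} exactly one
   is odious and one is evil, so the n-th odious (resp. evil) number is < 2n+2;
   hence listing the odious (evil) numbers below 2n+2 in increasing order and
   taking the item of index n gives the n-th one. *)
Definition a (n : nat) : nat := nth 0 [seq m <- iota 0 (2 * n + 2) | odious m] n.
Definition b (n : nat) : nat := nth 0 [seq m <- iota 0 (2 * n + 2) | evil m] n.

Example a_test : [seq a n | n <- iota 0 8] = [:: 1; 2; 4; 7; 8; 11; 13; 14]. Proof. by []. Qed.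
Example b_test : [seq b n | n <- iota 0 8] = [:: 0; 3; 5; 6; 9; 10; 12; 15]. Proof. by []. Qed.

(* Main.v *)
Require Import Defs.
From mathcomp Require Import all_boot zify.

Lemma binsum_aux_fuel f g n : n <= f -> n <= g -> binsum_aux f n = binsum_aux g n.
Proof.
elim: f g n => [|f IH] g n hf hg.
- have -> : n = 0 by lia. by case: g hg.
- case: g hg => [|g] hg; first by have -> : n = 0 by lia.
  case: n hf hg => [|n] hf hg //=. congr (_ + _). apply: IH.
  + rewrite ?leq_half_double ?leq_uphalf_double -?mul2n; lia.
  + rewrite ?leq_half_double ?leq_uphalf_double -?mul2n; lia.
Qed.

Lemma binsum_aux_S f n : 0 < n -> binsum_aux f.+1 n = odd n + binsum_aux f n./2.
Proof. by case: n. Qed.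

Lemma binsum_even m : binsum (2 * m) = binsum m.
Proof.
case: m => [|m] //. rewrite /binsum.
rewrite (binsum_aux_fuel _ (2 * m.+1).+1) //.
rewrite binsum_aux_S // mul2n doubleK odd_double add0n.
apply: binsum_aux_fuel; rewrite -?mul2n; lia.
Qed.

Lemma binsum_odd m : binsum (2 * m).+1 = (binsum m).+1.
Proof.
rewrite /binsum binsum_aux_S // mul2n /= uphalf_double odd_double add1n.
congr S; apply: binsum_aux_fuel; rewrite -?mul2n; lia.
Qed.

Lemma filt n : [seq m <- iota 0 (2 * n) | odious m]
             = [seq 2 * k + ~~ odd (binsum k) | k <- iota 0 n].
Proof.
elim: n => [|n IH] //.
have -> : 2 * n.+1 = 2 * n + 2 by lia.
rewrite iotaD filter_cat IH -[n.+1]addn1 iotaD map_cat /=.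
congr (_ ++ _). rewrite /odious binsum_even binsum_odd /=.
by case: (odd (binsum n)) => /=; rewrite ?addn0 ?addn1.
Qed.

Lemma filt' n : [seq m <- iota 0 (2 * n) | evil m]
             = [seq 2 * k + odd (binsum k) | k <- iota 0 n].
Proof.
elim: n => [|n IH] //.
have -> : 2 * n.+1 = 2 * n + 2 by lia.
rewrite iotaD filter_cat IH -[n.+1]addn1 iotaD map_cat /=.
congr (_ ++ _). rewrite /evil binsum_even binsum_odd /=.
by case: (odd (binsum n)) => /=; rewrite ?addn0 ?addn1.
Qed.

Lemma a_eq n : a n = 2 * n + ~~ odd (binsum n).
Proof.
rewrite /a (_ : 2 * n + 2 = 2 * n.+1); last by lia.
rewrite filt (nth_map 0) ?size_iota // nth_iota //.
Qed.

Lemma b_eq n : b n = 2 * n + odd (binsum n).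
Proof.
rewrite /b (_ : 2 * n + 2 = 2 * n.+1); last by lia.
rewrite filt' (nth_map 0) ?size_iota // nth_iota //.
Qed.

Theorem theorem5 (x y : nat -> nat)
  (hx : forall m n, m < n -> x m < x n)
  (hy : forall m n, m < n -> y m < y n)
  (hcover : forall k : nat, (exists n, x n = k) \/ (exists n, y n = k))
  (hx0 : x 0 = 1) (hy0 : y 0 = 0)
  (hxx : forall n, x (x n) = y (x n) - 1)
  (hyy : forall n, y (y n) = x (y n) - 1) :
  forall n, x n = a n /\ y n = b n.
Proof.
have xpos : forall n, 0 < x n.
  move=> [|n]; first by rewrite hx0. have := hx 0 n.+1 (ltn0Sn n); rewrite hx0; lia.
have hA : forall k, y (x k) = (x (x k)).+1.
  move=> k; have := hxx k; have := xpos (x k). lia.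
have hB : forall k, x (y k) = (y (y k)).+1.
  move=> k; have := hyy k; have := xpos (y k). lia.
have disj : forall i j, x i <> y j.
  move=> i j e; have := hA i; have := hB j; rewrite e; lia.
have xle : forall m n, m <= n -> x m <= x n.
  by move=> m n; rewrite leq_eqVlt => /orP [/eqP->|/hx/ltnW].
have yle : forall m n, m <= n -> y m <= y n.
  by move=> m n; rewrite leq_eqVlt => /orP [/eqP->|/hy/ltnW].
have hC : forall n, (x n = 2*n /\ y n = 2*n+1) \/ (x n = 2*n+1 /\ y n = 2*n).
  elim/ltn_ind => n IH.
  have lowx : 2*n <= x n.
    rewrite leqNgt; apply/negP => lt.
    have hmn : x n %/ 2 < n by lia.
    move: (IH _ hmn) (hx _ _ hmn) (disj n (x n %/ 2)); lia.
  have lowy : 2*n <= y n.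
    rewrite leqNgt; apply/negP => lt.
    have hmn : y n %/ 2 < n by lia.
    move: (IH _ hmn) (hy _ _ hmn) (disj (y n %/ 2) n); lia.
  have up : minn (x n) (y n) <= 2 * n.
    case: (hcover (2*n)) => [[i hi]|[i hi]]; case: (ltnP i n) => hin.
    - move: (IH _ hin); lia.
    - have := xle _ _ hin; lia.
    - move: (IH _ hin); lia.
    - have := yle _ _ hin; lia.
  case: (hcover n) => [[k hk]|[k hk]].
  - move: (hA k); rewrite hk; lia.
  - move: (hB k); rewrite hk; lia.
have hE1 : forall k, x (x k) = 2 * x k.
  move=> k; move: (hA k) (hC (x k)); lia.
have hE2 : forall k, x (y k) = 2 * y k + 1.
  move=> k; move: (hB k) (hC (y k)); lia.
have hD : forall n, x n = 2 * n + ~~ odd (binsum n).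
  elim/ltn_ind => n IH.
  case: n IH => [|n] IH; first by rewrite hx0.
  set m := n.+1 %/ 2.
  have hm : m < n.+1 by lia.
  move: (IH _ hm) (hC m) => xm ym.
  have [e|e] : n.+1 = 2 * m \/ n.+1 = (2 * m).+1 by lia.
  - rewrite e binsum_even.
    case hb: (odd (binsum m)) xm => /= xm.
    + have := hE1 m; rewrite xm addn0 => ->; lia.
    + have ym' : y m = 2 * m by lia.
      have := hE2 m; rewrite ym' => ->; lia.
  - rewrite e binsum_odd /=.
    case hb: (odd (binsum m)) xm => /= xm.
    + have ym' : y m = (2 * m).+1 by lia.
      have := hE2 m; rewrite ym' => ->; lia.
    + have xm' : x m = (2 * m).+1 by lia.
      have := hE1 m; rewrite xm' => ->; lia.
move=> n; rewrite a_eq b_eq hD; split => //.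
move: (hC n) (hD n); case: (odd (binsum n)) => /=; lia.
Qed.
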